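(* Let $\mathcal{L}=(n,\mathcal{M},\mathcal{C})$ be a simple linearization. If $G(D(\mathcal{L}))$ is acyclic, then the system $0\le y_m\le1$ ($m\in\mathcal{M}$), $y_{\bigcup c}\le y_m$ ($c\in\mathcal{C}$, $m\in c$), $\sum_{m\in c}y_m\le y_{\bigcup c}+|c|-1$ ($c\in\mathcal{C}$) is totally dual integral.
   Context: $[n]=\{1,\dots,n\}$; a monomial is a nonempty subset of $[n]$; $\mathcal{S}=\{\{i\}:i\in[n]\}$. A linearization is a triple $\mathcal{L}=(n,\mathcal{M},\mathcal{C})$, where $\mathcal{M}$ is a set of monomials with $\mathcal{S}\subseteq\mathcal{M}$ and $\mathcal{C}$ is a set of AND-constraints; each AND-constraint is a set $c\subseteq\mathcal{M}$ whose union $\bigcup c$ (resultant) lies in $\mathcal{M}$. $\mathcal{P}=\mathcal{M}\setminus\mathcal{S}$. Linearizations are consistent: each $m\in\mathcal{P}$ is the resultant of some $c$ with $|m'|<|m|$ for all $m'\in c$. $\mathcal{L}$ is simple if each proper monomial is the resultant of exactly one AND-constraint and $|\mathcal{C}|=|\mathcal{P}|$. $D(\mathcal{L})$ has node set $\mathcal{M}$ and, for each $c\in\mathcal{C}$, arcs from $\bigcup c$ to each $m\in c$; $G(D(\mathcal{L}))$ is its underlying undirected graph. Total dual integrality: for every integral objective with finite LP maximum, the dual has an integral optimal solution. *)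

(* Defs.v *)
From HB Require Import structures.
From mathcomp Require Import all_boot all_order all_algebra.
Set Implicit Arguments. Unset Strict Implicit. Unset Printing Implicit Defensive.
Import Order.TTheory GRing.Theory Num.Theory.
Local Open Scope ring_scope.

Section TDI.
Variables (V I : finType) (a : I -> V -> rat) (b : I -> rat).

Definition dotp (u y : V -> rat) : rat := \sum_(v : V) u v * y v.

Definition lp_feasible (y : V -> rat) : Prop := forall i, dotp (a i) y <= b i.

Definition lp_has_finite_max (w : V -> rat) : Prop :=
  exists2 y, lp_feasible y & forall y', lp_feasible y' -> dotp w y' <= dotp w y.

Definition dual_feasible (w : V -> rat) (lam : I -> rat) : Prop :=
  (forall i, 0 <= lam i) /\ (forall v, \sum_(i : I) lam i * a i v = w v).

Definition dual_obj (lam : I -> rat) : rat := \sum_(i : I) b i * lam i.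

Definition TDI : Prop :=
  forall w : V -> rat, (forall v, w v \is a Num.int) -> lp_has_finite_max w ->
  exists lam : I -> rat,
    [/\ dual_feasible w lam, (forall i, lam i \is a Num.int) &
        forall mu, dual_feasible w mu -> dual_obj lam <= dual_obj mu].
End TDI.

Section Linearization.
Variable n : nat.
Notation mono := {set 'I_n}.

Definition resultant (c : {set mono}) : mono := \bigcup_(m in c) m.

Definition singletons : {set mono} := [set [set i] | i : 'I_n].

Definition properM (M : {set mono}) : {set mono} := M :\: singletons.

Definition is_linearization (M : {set mono}) (C : {set {set mono}}) : Prop :=
  [/\ forall m, m \in M -> m != set0,
      singletons \subset M &
      forall c, c \in C -> c \subset M /\ resultant c \in M].

Definition consistent (M : {set mono}) (C : {set {set mono}}) : Prop :=
  forall m, m \in properM M ->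
    exists2 c, c \in C & resultant c = m /\ forall m', m' \in c -> (#|m'| < #|m|)%N.

Definition simple_lin (M : {set mono}) (C : {set {set mono}}) : Prop :=
  (forall m, m \in properM M -> #|[set c in C | resultant c == m]| = 1%N)
  /\ #|C| = #|properM M|.

Definition arcD (C : {set {set mono}}) (u v : mono) : bool :=
  [exists c in C, (resultant c == u) && (v \in c)].

Definition adjG (C : {set {set mono}}) (u v : mono) : bool :=
  arcD C u v || arcD C v u.

Definition acyclicG (M : {set mono}) (C : {set {set mono}}) : Prop :=
  forall p : seq mono, all (fun m => m \in M) p -> uniq p -> (2 < size p)%N ->
    ~~ cycle (adjG C) p.

Section System.
Variables (M : {set mono}) (C : {set {set mono}}).

Definition varT := {m : mono | m \in M}.
Definition pairT := {p : {set mono} * mono | (p.1 \in C) && (p.2 \in p.1)}.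
Definition consT := {c : {set mono} | c \in C}.
(* rows: (0 <= y_m) , (y_m <= 1) , (y_{Uc} <= y_m) , (sum y_m <= y_{Uc} + |c| - 1) *)
Definition rowT := ((varT + varT) + (pairT + consT))%type.

Definition ind (v : varT) (m : mono) : rat := (val v == m)%:R.

Definition sys_a (r : rowT) (v : varT) : rat :=
  match r with
  | inl (inl m) => - ind v (val m)
  | inl (inr m) => ind v (val m)
  | inr (inl p) => ind v (resultant (val p).1) - ind v (val p).2
  | inr (inr c) => (\sum_(m in val c) ind v m) - ind v (resultant (val c))
  end.

Definition sys_b (r : rowT) : rat :=
  match r with
  | inl (inl _) => 0
  | inl (inr _) => 1
  | inr (inl _) => 0
  | inr (inr c) => #|val c|%:R - 1
  end.
End System.
End Linearization.

(* Main.v *)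
Require Import Defs.
From HB Require Import structures.
From mathcomp Require Import all_boot all_order all_algebra.
From mathcomp Require Import ring lra.
Set Implicit Arguments. Unset Strict Implicit. Unset Printing Implicit Defensive.
Import Order.TTheory GRing.Theory Num.Theory.

Section Struct.
Variable n : nat.
Local Notation res := (@Defs.resultant n).
Notation mono := {set 'I_n}.
Variables (M : {set mono}) (C : {set {set mono}}).
Hypotheses (HL : is_linearization M C) (HC : consistent M C) (HS : simple_lin M C).

Lemma res_proper c : c \in C -> res c \in properM M.
Proof.
case: HS => H1 H2.
pose S := [set c in C | res c \in properM M].
have cardS : #|S| = #|C|.
  rewrite H2 -!sum1_card.
  rewrite (partition_big (fun c => res c) (mem (properM M))) /=; last first.
    by move=> i; rewrite inE => /andP[].
  apply: eq_bigr => m Pm.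
  rewrite -[RHS](H1 m Pm) -sum1_card.
  apply: eq_bigl => c'; rewrite !inE.
  case: (c' \in C) => //=; case E: (res c' == m); rewrite ?andbT ?andbF //.
  by move/eqP: E => ->; move: Pm; rewrite inE.
have SC : S \subset C by apply/subsetP => c'; rewrite inE => /andP[].
have := subset_cardP cardS SC => E.
by move=> cC; rewrite -E inE in cC; case/andP: cC.
Qed.

Lemma res_uniq c1 c2 : c1 \in C -> c2 \in C -> res c1 = res c2 -> c1 = c2.
Proof.
move=> c1C c2C E; case: HS => H1 _.
have := H1 _ (res_proper c1C) => /eqP/cards1P[c0 Hc0].
have : c1 \in [set c in C | res c == res c1] by rewrite inE c1C eqxx.
have : c2 \in [set c in C | res c == res c1] by rewrite inE c2C E eqxx.
by rewrite Hc0 !inE => /eqP -> /eqP ->.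
Qed.

Lemma mem_lt c m : c \in C -> m \in c -> (#|m| < #|res c|)%N.
Proof.
move=> cC mc; have [c' c'C [E H]] := HC (res_proper cC).
have ee := res_uniq c'C cC E; subst c'.
by apply: H.
Qed.

Lemma res_notin c : c \in C -> res c \notin c.
Proof. by move=> cC; apply/negP => /(mem_lt cC); rewrite ltnn. Qed.

Lemma two_mem c : c \in C -> exists m1 m2, [/\ m1 \in c, m2 \in c & m1 != m2].
Proof.
move=> cC; case: HL => Hne _ Hc.
have [_ rM] := Hc c cC.
have : c != set0.
  apply/negP => /eqP c0; have := Hne _ rM; rewrite /res c0 big_set0 eqxx //.
case/set0Pn => m1 m1c.
case: (boolP [exists m2 in c, m2 != m1]).
  by case/exists_inP => m2 m2c ne; exists m1, m2; rewrite eq_sym.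
rewrite negb_exists_in => /forall_inP H.
have : res c \subset m1.
  apply/bigcupsP => m mc; have := H m mc; rewrite negbK => /eqP -> //.
move/subset_leq_card; have := mem_lt cC m1c; rewrite ltnNge => /negP; done.
Qed.

Lemma C_sub c : c \in C -> c \subset M.
Proof. by case: HL => _ _ H /H []. Qed.
Lemma res_M c : c \in C -> res c \in M.
Proof. by case: HL => _ _ H /H []. Qed.

End Struct.

Section Graph.
Variable n : nat.
Local Notation res := (@Defs.resultant n).
Notation mono := {set 'I_n}.
Variables (M : {set mono}) (C : {set {set mono}}).
Hypotheses (HL : is_linearization M C) (HC : consistent M C) (HS : simple_lin M C)
  (HA : acyclicG M C).

Definition star (c : {set mono}) := res c |: c.

Definition adjS (C' : {set {set mono}}) (u v : mono) : bool :=
  [exists c in C', ((res c == u) && (v \in c)) || ((res c == v) && (u \in c))].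

Variable C' : {set {set mono}}.
Hypothesis sC : C' \subset C.

Lemma adjS_sym u v : adjS C' u v = adjS C' v u.
Proof.
by apply/existsP/existsP => -[c /andP[cC H]]; exists c; rewrite cC /= orbC.
Qed.

Lemma adjS_M u v : adjS C' u v -> u \in M.
Proof.
case/exists_inP => c /(subsetP sC) cC /orP[] /andP[/eqP E H].
  rewrite -E; apply: (res_M HL cC).
exact: (subsetP (C_sub HL cC)).
Qed.

Lemma adjS_irr u : ~~ adjS C' u u.
Proof.
apply/negP; case/exists_inP => c /(subsetP sC) cC.
by rewrite orbb => /andP[/eqP E]; rewrite -E (negPf (res_notin HC HS cC)).
Qed.

Lemma adjS_G u v : adjS C' u v -> adjG C u v.
Proof.
case/exists_inP => c /(subsetP sC) cC /orP[] H; rewrite /adjG.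
  by apply/orP; left; apply/exists_inP; exists c.
by apply/orP; right; apply/exists_inP; exists c.
Qed.

Definition gp (p : seq mono) := [&& uniq p, all (mem M) p & sorted (adjS C') p].

Lemma gp_tail a p : gp (a :: p) -> gp p.
Proof.
case/and3P => /= /andP[_ u] /andP[_ al] s; rewrite /gp u al /=.
by case: p s {u al} => //= b p /andP[].
Qed.

Lemma chord a b q v : gp [:: a, b & q] -> v \in q -> adjS C' v a -> False.
Proof.
move=> g vq av; case/splitPr: vq g => q1 q2 g.
case/and3P: g => u al s.
have E : [:: a, b & q1 ++ v :: q2] = (a :: b :: rcons q1 v) ++ q2.
  by rewrite /= cat_rcons.
rewrite E in u al s.
rewrite cat_uniq in u; case/andP: u => u _.
rewrite all_cat in al; case/andP: al => al _.
have cy : cycle (adjS C') (a :: b :: rcons q1 v).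
  rewrite /cycle rcons_path; apply/andP; split.
    by move: s => /= /andP[ab]; rewrite cat_path => /andP[s' _]; rewrite ab s'.
  by rewrite /= last_rcons.
have := HA al u; rewrite /= size_rcons => /(_ isT) /negP; apply.
exact: (sub_cycle adjS_G cy).
Qed.

Lemma gp_cons2 v a p : gp [:: v, a & p] = [&& v \notin a :: p, v \in M, adjS C' v a & gp (a :: p)].
Proof.
rewrite /gp /=.
by case: (v \in M); case: (adjS C' v a); case: (_ \in _); case: (_ \in _); rewrite /= ?andbF ?andbT.
Qed.

Lemma leaf : C' != set0 ->
  exists c x, [/\ c \in C', x \in star c &
    forall c', c' \in C' -> c' != c -> forall v, v \in star c -> v \in star c' -> v = x].
Proof.
case/set0Pn => c0 c0C.
have c0C' := subsetP sC _ c0C.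
pose P k := [exists t : k.-tuple mono, gp t].
have ex2 : exists k, P k.
  have [m1 [m2 [m1c _ _]]] := two_mem HL HC HS c0C'.
  exists 2; apply/existsP; exists [tuple m1; res c0].
  rewrite /gp /= andbT inE (res_M HL c0C') (subsetP (C_sub HL c0C')) //=.
  rewrite andbT; apply/andP; split.
    by apply/negP => /eqP E; have := res_notin HC HS c0C'; rewrite -E m1c.
  by apply/exists_inP; exists c0 => //; rewrite eqxx m1c orbT.
have ub : forall k, P k -> (k <= #|{: mono}|)%N.
  move=> k /existsP[t /and3P[u _ _]].
  by rewrite -(size_tuple t) -(card_uniqP u) max_card.
case: (ex_maxnP ex2 ub) => K /existsP[t gt] maxK.
have Hmax : forall p, gp p -> (size p <= K)%N.
  by move=> p gpp; apply: maxK; apply/existsP; exists (in_tuple p).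
have K2 : (2 <= K)%N by apply: maxK; case: ex2 => k; rewrite /P; move=> _;
  have [m1 [m2 [m1c _ _]]] := two_mem HL HC HS c0C';
  apply/existsP; exists [tuple m1; res c0];
  rewrite /gp /= andbT inE (res_M HL c0C') (subsetP (C_sub HL c0C')) //= andbT;
  apply/andP; split; [apply/negP => /eqP E; have := res_notin HC HS c0C'; rewrite -E m1c
                     | apply/exists_inP; exists c0 => //; rewrite eqxx m1c orbT].
case: t gt => p szp gt; rewrite /= in gt.
move/eqP: szp => szp.
have Hmax' : forall p', gp p' -> (size p' <= size p)%N by move=> p' /Hmax; rewrite szp.
case: p szp gt Hmax' => [|e [|f q]] szp gt Hmax'; first by move: K2; rewrite -szp.
  by move: K2; rewrite -szp.
have nbr : forall r, gp [:: r, f & q] -> forall v, adjS C' r v -> v = f.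
  move=> r gr v rv.
  have vM : v \in M by apply: (@adjS_M v r); rewrite adjS_sym.
  case vin: (v \in [:: r, f & q]).
    move: vin; rewrite in_cons => /orP[/eqP E|].
      by move: rv; rewrite E (negPf (adjS_irr r)).
    rewrite in_cons => /orP[/eqP // | vq].
    by case: (chord gr vq); rewrite adjS_sym.
  have : gp [:: v, r, f & q] by rewrite gp_cons2 vin vM adjS_sym rv gr.
  by move/Hmax' => /=; rewrite ltnn.
have nores : forall r, gp [:: r, f & q] -> forall c', c' \in C' -> res c' != r.
  move=> r gr c' c'C; apply/negP => /eqP E.
  have [m1 [m2 [m1c m2c ne]]] := two_mem HL HC HS (subsetP sC _ c'C).
  have h1 : adjS C' r m1 by apply/exists_inP; exists c' => //; rewrite E eqxx m1c.
  have h2 : adjS C' r m2 by apply/exists_inP; exists c' => //; rewrite E eqxx m2c.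
  by move: ne; rewrite (nbr _ gr _ h1) (nbr _ gr _ h2) eqxx.
have [c cC' [rcf ec]] : exists2 c, c \in C' & res c = f /\ e \in c.
  have := gt; rewrite gp_cons2 => /and4P[_ _ ef _].
  case/exists_inP: ef => c cC' /orP[] /andP[/eqP E H].
    by have := nores _ gt c cC'; rewrite E eqxx.
  by exists c.
have cC := subsetP sC _ cC'.
have onlyc : forall r, gp [:: r, f & q] -> forall c', c' \in C' -> r \in c' -> c' = c.
  move=> r gr c' c'C rc'.
  have h : adjS C' r (res c') by apply/exists_inP; exists c' => //; rewrite eqxx rc' orbT.
  apply: (res_uniq HS (subsetP sC _ c'C) cC); rewrite rcf; exact: nbr _ gr _ h.
have gfq := gp_tail gt.
have M2g : forall v, v \in q -> adjS C' v f -> v = head v q.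
  move=> v; case: q gt gfq {Hmax' nbr nores onlyc szp} => [|g q0] //= gt gfq.
  rewrite in_cons => /orP[/eqP -> //| vq0] av.
  by case: (chord gfq vq0 av).
have fnc : f \notin c by rewrite -rcf; apply: (res_notin HC HS cC).
have M1 : forall v, v \in c -> v \notin q -> forall c', c' \in C' -> c' != c -> v \notin star c'.
  move=> v vc vq c' c'C ne.
  have gv : gp [:: v, f & q].
    rewrite gp_cons2 gfq in_cons negb_or vq andbT (subsetP (C_sub HL cC)) //=.
    rewrite andbT; apply/andP; split.
      by apply/negP => /eqP E; move: fnc; rewrite -E vc.
    by apply/exists_inP; exists c => //; rewrite rcf eqxx vc orbT.
  rewrite /star in_setU1 negb_or; apply/andP; split.
    by rewrite eq_sym; apply: nores gv c' c'C.
  by apply/negP => /(onlyc _ gv c' c'C) E; rewrite E eqxx in ne.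
have M3 : forall c', c' \in C' -> c' != c -> f \in star c' ->
    exists g q0, [/\ q = g :: q0, res c' = g & f \in c'].
  move=> c' c'C ne; rewrite /star in_setU1 => /orP[/eqP E|fc'].
    have := res_uniq HS (subsetP sC _ c'C) cC; rewrite rcf -E => /(_ erefl) E'.
    by rewrite E' eqxx in ne.
  have hf : adjS C' (res c') f by apply/exists_inP; exists c' => //; rewrite eqxx fc'.
  case hq: (res c' \in q).
    have := M2g _ hq hf; case: q hq {gt gfq Hmax' nbr nores onlyc szp M2g M1} => [|g q0] // _ E.
    by exists g, q0.
  have gh : gp [:: res c', f & q].
    rewrite gp_cons2 gfq in_cons hq hf (res_M HL (subsetP sC _ c'C)) orbF /= andbT.
    by apply/negP => /eqP E; have := res_notin HC HS (subsetP sC _ c'C); rewrite E fc'.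
  by have := nores _ gh c' c'C; rewrite eqxx.
have vstar : forall v, v \in star c -> v = f \/ v \in c.
  by move=> v; rewrite /star in_setU1 rcf => /orP[/eqP|]; [left|right].
case: q gt Hmax' nbr nores onlyc gfq M2g M1 M3 szp => [|g q0] gt Hmax' nbr nores onlyc gfq M2g M1 M3 szp.
- exists c, f; split => //; first by rewrite /star -rcf setU11.
  move=> c' c'C ne v /vstar [-> //|vc] vc'.
  by have := M1 v vc isT c' c'C ne; rewrite vc'.
- case gc: (g \in c).
  + exists c, g; split => //; first by rewrite /star in_setU1 gc orbT.
    move=> c' c'C ne v /vstar [->|vc] vc'.
      have [g' [q0' [[Eg _] Er fc']]] := M3 c' c'C ne vc'; subst g'.
      have h1 := mem_lt HC HS cC gc; have h2 := mem_lt HC HS (subsetP sC _ c'C) fc'.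
      rewrite rcf in h1; rewrite Er in h2.
      by have := ltn_trans h1 h2; rewrite ltnn.
    have avf : adjS C' v f by apply/exists_inP; exists c => //; rewrite rcf eqxx vc orbT.
    case vq: (v \in g :: q0); first exact: M2g _ vq avf.
    by have := M1 v vc (negbT vq) c' c'C ne; rewrite vc'.
  + exists c, f; split => //; first by rewrite /star -rcf setU11.
    move=> c' c'C ne v /vstar [-> //|vc] vc'.
    have avf : adjS C' v f by apply/exists_inP; exists c => //; rewrite rcf eqxx vc orbT.
    case vq: (v \in g :: q0).
      by have := M2g _ vq avf => /= E; move: gc; rewrite -E vc.
    by have := M1 v vc (negbT vq) c' c'C ne; rewrite vc'.
Qed.
End Graph.

Local Open Scope ring_scope.

Definition pos (z : rat) : rat := if 0 <= z then z else 0.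
Definition neg (z : rat) : rat := if 0 <= z then 0 else - z.

Lemma posneg z : pos z - neg z = z.
Proof. by rewrite /pos /neg; case: ifP => _; rewrite ?subr0 // sub0r opprK. Qed.
Lemma pos_ge0 z : 0 <= pos z.
Proof. by rewrite /pos; case: ifP => // /negbT; rewrite -ltNge => /ltW. Qed.
Lemma neg_ge0 z : 0 <= neg z.
Proof. by rewrite /neg; case: ifP => // /negbT; rewrite -ltNge oppr_ge0 => /ltW. Qed.
Lemma pos_int z : z \is a Num.int -> pos z \is a Num.int.
Proof. by rewrite /pos; case: ifP. Qed.
Lemma neg_int z : z \is a Num.int -> neg z \is a Num.int.
Proof. by rewrite /neg; case: ifP => // _ zi; rewrite rpredN. Qed.
Lemma posE z : 0 <= z -> pos z = z. Proof. by rewrite /pos => ->. Qed.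
Lemma negE z : 0 <= z -> neg z = 0. Proof. by rewrite /neg => ->. Qed.
Lemma posN z : z <= 0 -> pos z = 0.
Proof. by rewrite /pos => H; case: ifP => // h; apply/eqP; rewrite eq_le H h. Qed.
Lemma negN z : z <= 0 -> neg z = - z.
Proof. by rewrite /neg => H; case: ifP => // h; have -> : z = 0 by apply/eqP; rewrite eq_le H h.
Qed.

Lemma argmin_ex (T : finType) (A : {set T}) (F : T -> rat) : A != set0 ->
  exists2 j, j \in A & forall i, i \in A -> F j <= F i.
Proof.
case/set0Pn => i0 i0A.
case: (@arg_minP _ _ _ i0 (mem A) F i0A) => j jA H.
by exists j.
Qed.

Lemma sumY (T : finType) (A : {set T}) (Y : T -> rat) j : j \in A ->
  (forall m, m \in A -> Y m <= 1) -> Y j = 0 -> \sum_(m in A) Y m <= #|A|%:R - 1.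
Proof.
move=> jA H Yj; rewrite (bigD1 j) //= Yj add0r.
rewrite (cardsD1 j A) jA natrD.
have -> : #|A :\ j|%:R = \sum_(m in A | m != j) (1:rat).
  by rewrite -sumr_const; apply: eq_bigl => m; rewrite !inE andbC.
have : \sum_(m in A | m != j) Y m <= \sum_(m in A | m != j) (1:rat).
  by apply: ler_sum => m /andP[mA _]; apply: H.
rewrite /=; lra.
Qed.

Lemma bool01 (b : bool) : 0 <= (b%:R : rat) <= 1.
Proof. by case: b. Qed.
Lemma bool0 (b : bool) : 0 <= (b%:R : rat).
Proof. by case: b. Qed.
Lemma bool1 (b : bool) : (b%:R : rat) <= 1.
Proof. by case: b. Qed.

Lemma posb z : z * ((0 < z)%R : bool)%:R = pos z.
Proof.
rewrite /pos; case: ltrP => h; first by rewrite mulr1 (ltW h).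
by rewrite mulr0; case: ifP => // h'; apply/eqP; rewrite eq_le h h'.
Qed.

Section Local.
Variable n : nat.
Local Notation res := (@Defs.resultant n).
Notation mono := {set 'I_n}.
Variables (M : {set mono}) (C : {set {set mono}}).
Hypotheses (HL : is_linearization M C) (HC : consistent M C) (HS : simple_lin M C).

Definition Wc (c : {set mono}) (x : mono) (W : mono -> rat) (D : rat) (m : mono) : rat :=
  if m == x then - D else if m \in star c then W m else 0.

Definition locfeas (c : {set mono}) (Y : mono -> rat) : Prop :=
  [/\ (forall m, 0 <= Y m <= 1), (forall m, m \in c -> Y (res c) <= Y m) &
      \sum_(m in c) Y m - Y (res c) <= #|c|%:R - 1].

Record local_ok (c : {set mono}) (x : mono) (W : mono -> rat) (D : rat)
   (al be ga : mono -> rat) (de : rat) (Y0 Y1 : mono -> rat) : Prop := LocalOk {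
  lo_D : D \is a Num.int;
  lo_nn : forall m, [/\ 0 <= al m, 0 <= be m & 0 <= ga m];
  lo_int : forall m, [/\ al m \is a Num.int, be m \is a Num.int & ga m \is a Num.int];
  lo_de : 0 <= de /\ de \is a Num.int;
  lo_out : forall m, m \notin star c -> al m = 0 /\ be m = 0;
  lo_col : forall m, be m - al m + (res c == m)%:R * (\sum_(m' in c) ga m' - de)
                     + (m \in c)%:R * (de - ga m) = Wc c x W D m;
  lo_Y0 : locfeas c Y0 /\ Y0 x = 0;
  lo_Y1 : locfeas c Y1 /\ Y1 x = 1;
  lo_ob0 : \sum_(m in star c) be m + de * (#|c|%:R - 1) = \sum_(m in star c) Wc c x W D m * Y0 m;
  lo_ob1 : \sum_(m in star c) be m + de * (#|c|%:R - 1) = \sum_(m in star c) Wc c x W D m * Y1 m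
}.

Lemma sum_star c (F : mono -> rat) : c \in C ->
  \sum_(m in star c) F m = F (res c) + \sum_(m in c) F m.
Proof. by move=> cC; rewrite /star big_setU1 //= (res_notin HC HS cC). Qed.

Lemma sum_lin (T : finType) (A : {set T}) (f g : T -> rat) (d : rat) :
  \sum_(m in A) (f m - g m + d) = \sum_(m in A) f m - \sum_(m in A) g m + #|A|%:R * d.
Proof. by rewrite big_split sumrB sumr_const mulr_natl. Qed.

Lemma local_u c W : c \in C -> (forall m, W m \is a Num.int) ->
  exists D al be ga de Y0 Y1, local_ok c (res c) W D al be ga de Y0 Y1.
Proof.
move=> cC Wi.
set u := res c.
have unc : u \notin c := res_notin HC HS cC.
have [m1 [m2 [m1c m2c ne]]] := two_mem HL HC HS cC.
have cne : c != set0 by apply/set0Pn; exists m1.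
have [j jc jmin] := argmin_ex W cne.
set d := pos (W j).
set D := d - \sum_(m in c) neg (W m - d).
exists D, (fun _ => 0), (fun m => if m \in c then pos (W m - d) else 0), (fun m => neg (W m - d)), d,
  (fun m => if m \in c then ((m != j) && (0 < W m))%:R else 0), (fun m => if m \in star c then 1 else 0).
have di : d \is a Num.int by apply: pos_int.
have d0 : 0 <= d by apply: pos_ge0.
have ustar : u \in star c by rewrite /star setU11.
have cstar : forall m, m \in c -> m \in star c by move=> m mc; rewrite /star in_setU1 mc orbT.
have ncu : forall m, m \in c -> (m == u) = false.
  by move=> m mc; apply/negP => /eqP E; move: unc; rewrite -E mc.
split.
- by rewrite /D rpredB // rpred_sum // => m _; apply: neg_int; rewrite rpredB.
- by move=> m; rewrite lexx neg_ge0; case: ifP => _; rewrite ?pos_ge0 ?lexx.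
- by move=> m; rewrite rpred0 neg_int ?rpredB //; case: ifP => _; rewrite ?pos_int ?rpredB.
- by [].
- by move=> m; rewrite /star in_setU1 negb_or => /andP[_ /negPf ->].
- move=> m; rewrite /Wc.
  case: (eqVneq m u) => [->|mu].
    rewrite (negPf unc) /D /=; lra.
  case mc: (m \in c).
    rewrite cstar //=; have := posneg (W m - d); lra.
  have -> : (m \in star c) = false by rewrite /star in_setU1 (negPf mu) mc.
  rewrite /=; lra.
- split; last by rewrite (negPf unc).
  split.
  + by move=> m; case: ifP => _; rewrite ?bool01 ?lexx ?ler01.
  + by move=> m mc; rewrite (negPf unc) mc bool0.
  + rewrite (negPf unc) subr0; apply: (sumY jc).
      by move=> m mc; rewrite mc bool1.
    by rewrite jc eqxx.
- split; last by rewrite ustar.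
  split.
  + by move=> m; case: ifP => _; lra.
  + by move=> m mc; rewrite ustar cstar.
  + rewrite ustar (eq_bigr (fun _ => 1)); last by move=> m /cstar ->.
    by rewrite sumr_const.
- rewrite !sum_star // /Wc eqxx (negPf unc) mulr0 !add0r.
  rewrite (eq_bigr (fun m => pos (W m - d))); last by move=> m ->.
  rewrite [in RHS](eq_bigr (fun m => W m * ((m != j) && (0 < W m))%:R)); last first.
    by move=> m mc; rewrite ncu // cstar // mc.
  case: (lerP (W j) 0) => Wj.
    have d0' : d = 0 by rewrite /d posN.
    rewrite d0' mul0r addr0.
    apply: eq_bigr => m mc; rewrite subr0.
    case: (eqVneq m j) => [->|mj] /=; first by rewrite posN // mulr0.
    by rewrite /pos; case: (ltrP 0 (W m)) => h; rewrite ?mulr1 ?mulr0 ?(ltW h) //; case: ifP => // h'; apply/eqP; rewrite eq_le h h'.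
  have dj : d = W j by rewrite /d posE // ltW.
  rewrite (eq_bigr (fun m => W m - d + 0)); last first.
    by move=> m mc; rewrite addr0 posE // subr_ge0 dj jmin.
  have R : \sum_(i in c) W i * ((i != j) && (0 < W i))%:R = \sum_(i in c) W i - W j.
    rewrite (bigD1 j jc) /= eqxx mulr0 add0r [X in _ = X - _](bigD1 j jc) /= addrC addrK.
    apply: eq_bigr => m /andP[mc mj]; rewrite mj /= (lt_le_trans Wj (jmin m _)) ?mulr1 //.
  rewrite R (eq_bigr (fun m => W m - (fun _ => d) m + 0)) // sum_lin sumr_const.
  rewrite -dj; ring.
- rewrite !sum_star // /Wc eqxx (negPf unc) ustar add0r mulr1.
  rewrite (eq_bigr (fun m => pos (W m - d))); last by move=> m ->.
  rewrite [in RHS](eq_bigr (fun m => pos (W m - d) - neg (W m - d) + d)); last first.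
    by move=> m mc; rewrite ncu // cstar // mulr1 posneg subrK.
  rewrite sum_lin /D; ring.
Qed.

Lemma local_x c x W : c \in C -> x \in c -> (forall m, W m \is a Num.int) ->
  exists D al be ga de Y0 Y1, local_ok c x W D al be ga de Y0 Y1.
Proof.
move=> cC xc Wi.
set u := res c.
have unc : u \notin c := res_notin HC HS cC.
have [m1 [m2 [m1c m2c ne]]] := two_mem HL HC HS cC.
set O := c :\ x.
have One : O != set0.
  apply/set0Pn; case: (eqVneq m1 x) => [E|h]; last by exists m1; rewrite !inE h m1c.
  by exists m2; rewrite !inE m2c andbT -E eq_sym.
have [j jO jmin] := argmin_ex W One.
have Oc : forall m, m \in O -> m \in c by move=> m; rewrite !inE => /andP[].
have xO : x \notin O by rewrite !inE eqxx.
have jc := Oc _ jO.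
set d := if neg (W u) <= pos (W j) then neg (W u) else pos (W j).
set Nd := \sum_(i in O) neg (W i - d).
set t := W u + d - Nd.
set g := pos t.
set au := neg t.
set D := g - d.
have d0 : 0 <= d by rewrite /d; case: ifP => _; rewrite ?pos_ge0 ?neg_ge0.
have di : d \is a Num.int.
  by rewrite /d; case: ifP => _; rewrite ?pos_int ?neg_int.
have dle1 : d <= neg (W u) by rewrite /d; case: ifP => // /negbT; rewrite -ltNge => /ltW.
have dle2 : d <= pos (W j) by rewrite /d; case: ifP.
have F1 : 0 < d -> forall i, i \in O -> d <= W i.
  move=> dpos i iO; have : 0 < pos (W j) by apply: lt_le_trans dle2.
  move=> h; have Wj : 0 < W j.
    by move: h; rewrite /pos; case: ifP => //; rewrite ltxx.
  by apply: le_trans (jmin i iO); rewrite (posE (ltW Wj)) in dle2.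
have cstar : forall m, m \in c -> m \in star c by move=> m mc; rewrite /star in_setU1 mc orbT.
have ustar : u \in star c by rewrite /star setU11.
have ncu : forall m, m \in c -> (m == u) = false.
  by move=> m mc; apply/negP => /eqP E; move: unc; rewrite -E mc.
have xu : (x == u) = false by apply: ncu.
have ux : (u == x) = false by rewrite eq_sym.
have uO : u \notin O by apply/negP => /Oc; apply/negP.
have kc : #|c|%:R = #|O|%:R + 1 :> rat by rewrite (cardsD1 x c) xc natrD addrC.
have sum_cx : forall F : mono -> rat, \sum_(m in c) F m = F x + \sum_(m in O) F m.
  by move=> F; rewrite (big_setD1 x xc).
have Odx : forall m, m \in O -> (m == x) = false.
  by move=> m; rewrite !inE => /andP[/negPf].
exists D, (fun m => if m == u then au else 0), (fun m => if m \in O then pos (W m - d) else 0),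
  (fun m => if m == x then g else neg (W m - d)), d,
  (fun m => if m \in O then ((0 < W m)%R : bool)%:R else 0),
  (fun m => if 0 <= t then (if m \in star c then 1 else 0)
            else (if m == x then 1 else if m \in O then ((m != j) && (0 < W m))%:R else 0)).
have Sg : \sum_(m in c) (if m == x then g else neg (W m - d)) = g + Nd.
  rewrite sum_cx eqxx; congr (_ + _); apply: eq_bigr => m mO; by rewrite Odx.
have ti : t \is a Num.int.
  rewrite /t rpredB ?rpredD ?Wi // /Nd rpred_sum // => i _.
  by apply: neg_int; rewrite rpredB ?Wi.
have Wcu : Wc c x W D u = W u by rewrite /Wc eq_sym xu ustar.
have Wcx : Wc c x W D x = - D by rewrite /Wc eqxx.
have WcO : forall m, m \in O -> Wc c x W D m = W m.
  by move=> m mO; rewrite /Wc Odx // cstar // Oc.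
have TW : forall m, m \in O -> W m * ((0 < W m)%R : bool)%:R = pos (W m - d) + d.
  move=> m mO; have [->|dp] := eqVneq d 0; first by rewrite subr0 addr0 posb.
  have dp' : 0 < d by rewrite lt_def dp d0.
  have h := F1 dp' m mO.
  by rewrite (lt_le_trans dp' h) mulr1 posE ?subrK // subr_ge0.
have LHSe : \sum_(m in star c) (if m \in O then pos (W m - d) else 0) + d * (#|c|%:R - 1)
           = \sum_(m in O) pos (W m - d) + d * #|O|%:R.
  rewrite sum_star // sum_cx (negPf uO) (negPf xO) !add0r kc addrK.
  by congr (_ + _); apply: eq_bigr => m ->.
split.
- by rewrite /D /g rpredB ?pos_int.
- move=> m; split; first by case: ifP => _; rewrite ?lexx ?neg_ge0.
    by case: ifP => _; rewrite ?lexx ?pos_ge0.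
  by case: ifP => _; rewrite ?pos_ge0 ?neg_ge0.
- move=> m; split; first by case: ifP => _; rewrite ?rpred0 ?neg_int.
    by case: ifP => _; rewrite ?rpred0 ?pos_int ?rpredB ?Wi ?di.
  by case: ifP => _; [apply: pos_int | apply: neg_int; rewrite rpredB ?Wi].
- by [].
- move=> m ms; have mu : (m == u) = false.
    by apply/negP => /eqP E; move: ms; rewrite E ustar.
  rewrite mu; case: ifP => // /Oc /cstar h; by rewrite h in ms.
- move=> m; case: (eqVneq m u) => [->|mu].
    rewrite Wcu (negPf uO) (negPf unc) Sg /= mul0r addr0.
    have := posneg t; rewrite /t -/g -/au; lra.
  have um : (u == m) = false by rewrite eq_sym; apply/negbTE.
  rewrite mul0r addr0.
  case: (eqVneq m x) => [->|mx].
    by rewrite Wcx (negPf xO) xc /D /= mul1r; lra.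
  case mO: (m \in O).
    rewrite WcO // Oc // /= mul1r; have := posneg (W m - d); lra.
  have mc : (m \in c) = false.
    by apply/negP => mc; move: mO; rewrite !inE mx mc.
  have -> : Wc c x W D m = 0.
    by rewrite /Wc (negPf mx) /star in_setU1 (negPf mu) mc.
  by rewrite mc mul0r; lra.
- split; last by rewrite (negPf xO).
  split.
  + by move=> m; case: ifP => _; rewrite ?bool01 ?lexx ?ler01.
  + by move=> m mc; rewrite (negPf uO); case: ifP => _; rewrite ?bool0.
  + rewrite (negPf uO) subr0; apply: (sumY xc); last by rewrite (negPf xO).
    by move=> m _; case: ifP => _; rewrite ?bool1 ?ler01.
- have [ht|ht] := boolP (0 <= t); rewrite ?ht ?(negPf ht).
    split; last by rewrite cstar.
    split.
    + by move=> m; case: ifP => _; rewrite ?lexx ?ler01.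
    + by move=> m mc; rewrite ustar cstar.
    + rewrite ustar (eq_bigr (fun _ => 1)); last by move=> m /cstar ->.
      by rewrite sumr_const.
  split; last by rewrite eqxx.
  split.
  + move=> m; case: ifP => _; rewrite ?lexx ?ler01 //.
    by case: ifP => _; rewrite ?bool01 ?lexx ?ler01.
  + move=> m mc; rewrite -/u ux (negPf uO).
    by case: ifP => _; [rewrite ler01 | case: ifP => _; rewrite ?bool0 ?lexx].
  + rewrite -/u ux (negPf uO) subr0; apply: (sumY jc).
      by move=> m _; case: ifP => _; rewrite ?lexx ?ler01 //; case: ifP => _; rewrite ?bool1 ?ler01.
    by rewrite Odx // jO eqxx.
- rewrite LHSe sum_star // sum_cx (negPf uO) (negPf xO) !mulr0 !add0r.
  rewrite [in RHS](eq_bigr (fun m => pos (W m - d) + d)); last first.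
    by move=> m mO; rewrite mO WcO // TW.
  by rewrite big_split sumr_const mulr_natr.
- rewrite LHSe sum_star // sum_cx.
  have [ht|ht] := boolP (0 <= t); rewrite ?ht ?(negPf ht).
    rewrite ustar cstar // !mulr1 Wcu Wcx.
    rewrite [in RHS](eq_bigr (fun m => pos (W m - d) - neg (W m - d) + d)); last first.
      by move=> m mO; rewrite cstar ?Oc // mulr1 WcO // posneg subrK.
    rewrite sum_lin /D /g (posE ht) /t /Nd; ring.
  rewrite ux (negPf uO) eqxx mulr0 mulr1 add0r Wcx.
  have tn : t < 0 by rewrite ltNge.
  have g0 : g = 0 by rewrite /g posN // ltW.
  rewrite [in RHS](eq_bigr (fun m => W m * ((m != j) && (0 < W m))%:R)); last first.
    by move=> m mO; rewrite Odx // mO WcO.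
  rewrite /D g0 sub0r opprK.
  have [dz|dp] := eqVneq d 0.
    have Wj : W j <= 0.
      rewrite leNgt; apply/negP => Wj.
      have Wpos : forall i, i \in O -> 0 < W i.
        by move=> i iO; apply: lt_le_trans Wj (jmin i iO).
      have Nd0 : Nd = 0.
        by rewrite /Nd big1 // => i iO; rewrite dz subr0 negE // ltW // Wpos.
      have Wu : W u < 0 by move: tn; rewrite /t Nd0 dz; lra.
      have : 0 < d.
        rewrite /d; case: ifP => _; first by rewrite negN ?(ltW Wu) //; lra.
        by rewrite posE ?(ltW Wj).
      by rewrite dz ltxx.
    rewrite dz mul0r addr0 add0r.
    apply: eq_bigr => m mO; rewrite subr0.
    by case: (eqVneq m j) => [->|mj] /=; [rewrite posN // mulr0 | rewrite posb].
  have dp' : 0 < d by rewrite lt_def dp d0.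
  have F := F1 dp'.
  have Nd0 : Nd = 0.
    by rewrite /Nd big1 // => i iO; rewrite negE // subr_ge0 F.
  have Wu : d < neg (W u).
    move: tn; rewrite /t Nd0 => tn.
    by rewrite negN; lra.
  have dj : d = W j.
    have dpj : d = pos (W j).
      move: Wu; rewrite /d; case: ifP => // _; lra.
    by rewrite dpj posE // (le_trans d0) // F.
  rewrite [in LHS](eq_bigr (fun m => W m - (fun _ => d) m + 0)); last first.
    by move=> m mO; rewrite addr0 posE // subr_ge0 F.
  rewrite sum_lin sumr_const (bigD1 j jO) [in RHS](bigD1 j jO) /= eqxx /= !mulr0.
  rewrite [in RHS](eq_bigr (fun m => W m)); last first.
    by move=> m /andP[mO mj]; rewrite mj (lt_le_trans dp' (F m mO)) mulr1.
  rewrite -dj; ring.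
Qed.

End Local.

Section Ind.
Variable n : nat.
Local Notation res := (@Defs.resultant n).
Notation mono := {set 'I_n}.
Variables (M : {set mono}) (C : {set {set mono}}).
Hypotheses (HL : is_linearization M C) (HC : consistent M C) (HS : simple_lin M C)
  (HA : acyclicG M C).

Definition col (al be : mono -> rat) (ga : {set mono} -> mono -> rat) (de : {set mono} -> rat)
  (m : mono) : rat :=
  be m - al m + \sum_(c in C) ((res c == m)%:R * (\sum_(m' in c) ga c m' - de c)
                               + (m \in c)%:R * (de c - ga c m)).

Definition dobj (be : mono -> rat) (de : {set mono} -> rat) : rat :=
  \sum_(m in M) be m + \sum_(c in C) de c * (#|c|%:R - 1).

Definition feasC (C' : {set {set mono}}) (Y : mono -> rat) : Prop :=
  (forall m, m \in M -> 0 <= Y m <= 1) /\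
  (forall c, c \in C' -> (forall m, m \in c -> Y (res c) <= Y m) /\
                         \sum_(m in c) Y m - Y (res c) <= #|c|%:R - 1).

Definition pobj (W Y : mono -> rat) : rat := \sum_(m in M) W m * Y m.

Record sol (C' : {set {set mono}}) (W : mono -> rat) al be ga de (Y : mono -> rat) : Prop := Sol {
  s_ab : forall m, [/\ 0 <= al m, 0 <= be m, al m \is a Num.int & be m \is a Num.int];
  s_g : forall c m, 0 <= ga c m /\ ga c m \is a Num.int;
  s_d : forall c, 0 <= de c /\ de c \is a Num.int;
  s_supp : forall c, c \notin C' -> de c = 0 /\ forall m, ga c m = 0;
  s_col : forall m, m \in M -> col al be ga de m = W m;
  s_feas : feasC C' Y;
  s_obj : dobj be de = pobj W Y
}.

Lemma col_add (a1 b1 a2 b2 : mono -> rat) (g1 g2 : {set mono} -> mono -> rat)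
  (d1 d2 : {set mono} -> rat) (m : mono) :
  col (fun m => a1 m + a2 m) (fun m => b1 m + b2 m) (fun c m => g1 c m + g2 c m)
      (fun c => d1 c + d2 c) m = col a1 b1 g1 d1 m + col a2 b2 g2 d2 m.
Proof.
rewrite /col.
rewrite (eq_bigr (fun c => ((res c == m)%:R * (\sum_(m' in c) g1 c m' - d1 c)
                               + (m \in c)%:R * (d1 c - g1 c m)) +
                           ((res c == m)%:R * (\sum_(m' in c) g2 c m' - d2 c)
                               + (m \in c)%:R * (d2 c - g2 c m)))); last by move=> c _; rewrite big_split /=; ring.
rewrite big_split /=; ring.
Qed.

Lemma col_star c (al be ga : mono -> rat) (de : rat) (m : mono) : c \in C ->
  col al be (fun c' m => if c' == c then ga m else 0) (fun c' => if c' == c then de else 0) m =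
  be m - al m + (res c == m)%:R * (\sum_(m' in c) ga m' - de) + (m \in c)%:R * (de - ga m).
Proof.
move=> cC; rewrite /col (bigD1 c cC) /= eqxx [X in _ + (_ + X)]big1 ?addr0; last first.
  move=> c' /andP[_ /negPf ->]; rewrite big1 //; ring.
rewrite (eq_bigr (fun m' => ga m')) //; ring.
Qed.

Lemma sum_M_star c (F : mono -> rat) : c \in C -> (forall m, m \notin star c -> F m = 0) ->
  \sum_(m in M) F m = \sum_(m in star c) F m.
Proof.
move=> cC H; rewrite (big_setID (star c)) /= [X in _ + X]big1 ?addr0; last first.
  by move=> m; rewrite inE => /andP[/H].
have -> : M :&: star c = star c; last by [].
apply/setIidPr/subsetP => m; rewrite /star in_setU1 => /orP[/eqP ->|].
  exact: (res_M HL cC).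
exact: (subsetP (C_sub HL cC)).
Qed.

Lemma conv01 (t a b : rat) : 0 <= t -> t <= 1 -> 0 <= a <= 1 -> 0 <= b <= 1 ->
  0 <= (1 - t) * a + t * b <= 1.
Proof. move=> ? ? /andP[? ?] /andP[? ?]; apply/andP; split; nra. Qed.

Lemma convle (t a b a' b' : rat) : 0 <= t -> t <= 1 -> a <= b -> a' <= b' ->
  (1 - t) * a + t * a' <= (1 - t) * b + t * b'.
Proof. move=> *; nra. Qed.

Theorem claim k : forall C' : {set {set mono}}, (#|C'| < k)%N -> C' \subset C ->
  forall W, (forall m, W m \is a Num.int) -> exists al be ga de Y, sol C' W al be ga de Y.
Proof.
elim: k => // k IH C' Hk sC W Wi.
case: (eqVneq C' set0) => [->|ne].
  exists (fun m => neg (W m)), (fun m => pos (W m)), (fun _ _ => 0), (fun _ => 0),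
    (fun m => ((0 < W m)%R : bool)%:R).
  split.
  - by move=> m; rewrite neg_ge0 pos_ge0 neg_int ?pos_int.
  - by move=> c m; rewrite lexx rpred0.
  - by move=> c; rewrite lexx rpred0.
  - by [].
  - move=> m _; rewrite /col big1 ?addr0 ?posneg // => c _.
    by rewrite big1 // subrr !mulr0 addr0.
  - by split => [m _|c]; rewrite ?bool01 ?inE.
  - rewrite /dobj /pobj [X in _ + X]big1 ?addr0; last by move=> c _; rewrite mul0r.
    by apply: eq_bigr => m _; rewrite posb.
have [c [x [cC' xs priv]]] := leaf HL HC HS HA sC ne.
have cC := subsetP sC _ cC'.
have [D [al [be [ga [de [Y0 [Y1 lo]]]]]]] :
    exists D al be ga de Y0 Y1, local_ok c x W D al be ga de Y0 Y1.
  move: (xs); rewrite /star in_setU1 => /orP[/eqP ->|xc].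
    exact: (local_u HL HC HS cC Wi).
  exact: (local_x HL HC HS cC xc Wi).
set W2 := fun m => if m == x then W m + D else if m \in star c then 0 else W m.
have W2i : forall m, W2 m \is a Num.int.
  move=> m; rewrite /W2; case: ifP => _; first by rewrite rpredD ?Wi ?(lo_D lo).
  by case: ifP => _; rewrite ?rpred0 ?Wi.
have Hk2 : (#|C' :\ c| < k)%N.
  by move: Hk; rewrite (cardsD1 c C') cC' add1n ltnS.
have sC2 : C' :\ c \subset C by apply: subset_trans sC; apply: subD1set.
have [al2 [be2 [ga2 [de2 [Y2 S2]]]]] := IH _ Hk2 sC2 W2 W2i.
have starM : forall m, m \in star c -> m \in M.
  move=> m; rewrite /star in_setU1 => /orP[/eqP ->|]; first exact: (res_M HL cC).
  exact: (subsetP (C_sub HL cC)).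
have xM := starM _ xs.
set t := Y2 x.
have [t0 t1] : 0 <= t /\ t <= 1 by have := (s_feas S2).1 x xM; case/andP.
have [[Y0b Y0u Y0s] Y0x] := lo_Y0 lo.
have [[Y1b Y1u Y1s] Y1x] := lo_Y1 lo.
set Yc := fun m => (1 - t) * Y0 m + t * Y1 m.
have Ycx : Yc x = t by rewrite /Yc Y0x Y1x; ring.
exists (fun m => al2 m + al m), (fun m => be2 m + be m),
  (fun c' m => ga2 c' m + (if c' == c then ga m else 0)),
  (fun c' => de2 c' + (if c' == c then de else 0)),
  (fun m => if m \in star c then Yc m else Y2 m).
split.
- move=> m; have [a1 b1 c1 d1] := s_ab S2 m.
  have [a2 b2 _] := lo_nn lo m; have [a3 b3 _] := lo_int lo m.
  by rewrite !addr_ge0 ?rpredD.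
- move=> c' m; have [a1 b1] := s_g S2 c' m; have [_ _ a2] := lo_nn lo m.
  have [_ _ a3] := lo_int lo m.
  by case: ifP => _; rewrite ?addr0 ?addr_ge0 ?rpredD.
- move=> c'; have [a1 b1] := s_d S2 c'; have [a2 b2] := lo_de lo.
  by case: ifP => _; rewrite ?addr0 ?addr_ge0 ?rpredD.
- move=> c' nc'.
  have ne' : (c' == c) = false by apply/negP => /eqP E; move: nc'; rewrite E cC'.
  have nc2 : c' \notin C' :\ c by rewrite !inE ne' (negPf nc').
  have [h1 h2] := s_supp S2 nc2.
  by rewrite ne' h1 addr0; split => // m; rewrite h2 addr0.
- move=> m mM; rewrite col_add col_star // (s_col S2 mM) (lo_col lo m) /W2 /Wc.
  by case: ifP => _; [ring | case: ifP => _; ring].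
- split.
    move=> m mM; case: ifP => ms; last exact: (s_feas S2).1.
    by apply: conv01.
  move=> c' c'C; case: (eqVneq c' c) => [->|ne'].
    have us : res c \in star c by rewrite /star setU11.
    have cs : forall m, m \in c -> m \in star c by move=> m mc; rewrite /star in_setU1 mc orbT.
    split.
      by move=> m mc; rewrite us cs //; apply: convle => //; [apply: Y0u | apply: Y1u].
    rewrite us (eq_bigr Yc); last by move=> m /cs ->.
    rewrite /Yc big_split /= -!mulr_sumr.
    have : (1 - t) * (\sum_(i in c) Y0 i - Y0 (res c)) + t * (\sum_(i in c) Y1 i - Y1 (res c))
           <= (1 - t) * (#|c|%:R - 1) + t * (#|c|%:R - 1) by apply: convle.
    set k1 := #|c|%:R; lra.
  have c'C2 : c' \in C' :\ c by rewrite !inE ne' c'C.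
  have eqY : forall v, v \in star c' -> (if v \in star c then Yc v else Y2 v) = Y2 v.
    move=> v vs'; case: ifP => // vs.
    by rewrite (priv c' c'C ne' v vs vs') Ycx.
  have [h1 h2] := (s_feas S2).2 c' c'C2.
  have rs' : res c' \in star c' by rewrite /star setU11.
  have cs' : forall m, m \in c' -> m \in star c' by move=> m mc; rewrite /star in_setU1 mc orbT.
  split.
    move=> m mc; rewrite (eqY _ rs') (eqY _ (cs' m mc)); exact: (h1 m mc).
  rewrite (eqY _ rs') (eq_bigr Y2) //; by move=> m /cs' /eqY.
- have Dsplit : dobj (fun m => be2 m + be m) (fun c' => de2 c' + (if c' == c then de else 0))
      = dobj be2 de2 + (\sum_(m in star c) be m + de * (#|c|%:R - 1)).
    rewrite /dobj big_split /= (@sum_M_star c be cC); last by move=> m /(lo_out lo) [].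
    rewrite (eq_bigr (fun c' => de2 c' * (#|c'|%:R - 1) + (if c' == c then de else 0) * (#|c'|%:R - 1)));
      last by move=> c' _; rewrite mulrDl.
    rewrite big_split /= [X in _ + (_ + X) = _](bigD1 c cC) /= eqxx.
    rewrite [X in _ + (_ + (_ + X)) = _]big1; last first.
      by move=> c' /andP[_ /negPf ->]; rewrite mul0r.
    ring.
  have Psplit : pobj W (fun m => if m \in star c then Yc m else Y2 m)
      = pobj W2 Y2 + \sum_(m in star c) Wc c x W D m * Yc m.
    have -> : \sum_(m in star c) Wc c x W D m * Yc m =
              \sum_(m in star c) (if m \in star c then Wc c x W D m * Yc m else 0).
      by apply: eq_bigr => m ->.
    rewrite -(@sum_M_star c _ cC); last by move=> m /negPf ->.
    rewrite /pobj -big_split /=; apply: eq_bigr => m mM.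
    rewrite /W2 /Wc; case: (eqVneq m x) => [->|mx]; first by rewrite xs Ycx -/t; ring.
    by case: ifP => _; ring.
  rewrite Dsplit Psplit (s_obj S2); congr (_ + _).
  have e0 := lo_ob0 lo; have e1 := lo_ob1 lo.
  rewrite [in RHS](eq_bigr (fun m => (1 - t) * (Wc c x W D m * Y0 m) + t * (Wc c x W D m * Y1 m)));
    last by move=> m _; rewrite /Yc; ring.
  rewrite big_split /= -!mulr_sumr -e0 -e1; ring.
Qed.

End Ind.

Lemma sum_sig (T : finType) (P : pred T) (F : T -> rat) :
  \sum_(s : {x : T | P x}) F (val s) = \sum_(x | P x) F x.
Proof. exact: (esym (big_sub P F)). Qed.

Section Weak.
Variables (V I : finType) (a : I -> V -> rat) (b : I -> rat).
Lemma weak_dual w y mu : lp_feasible a b y -> dual_feasible a w mu ->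
  dotp w y <= dual_obj b mu.
Proof.
move=> fy [mu0 mua]; rewrite /dotp /dual_obj.
rewrite (eq_bigr (fun v => \sum_(i : I) mu i * a i v * y v)); last first.
  by move=> v _; rewrite -mua mulr_suml.
rewrite exchange_big /=; apply: ler_sum => i _.
rewrite (eq_bigr (fun v => mu i * (a i v * y v))); last by move=> v _; rewrite mulrA.
rewrite -mulr_sumr mulrC; apply: ler_wpM2r => //; exact: fy.
Qed.

Lemma dotpB (f g y : V -> rat) : dotp (fun v => f v - g v) y = dotp f y - dotp g y.
Proof. by rewrite /dotp -sumrB; apply: eq_bigr => v _; rewrite mulrBl. Qed.
Lemma dotpN (f y : V -> rat) : dotp (fun v => - f v) y = - dotp f y.
Proof. by rewrite /dotp -sumrN; apply: eq_bigr => v _; rewrite mulNr. Qed.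
Lemma dotp_sum (T : finType) (A : pred T) (F : T -> V -> rat) y :
  dotp (fun v => \sum_(m in A) F m v) y = \sum_(m in A) dotp (F m) y.
Proof.
rewrite /dotp (eq_bigr (fun v => \sum_(m in A) F m v * y v)); last by move=> v _; rewrite mulr_suml.
by rewrite exchange_big.
Qed.
End Weak.

Section Final.
Variable n : nat.
Local Notation res := (@Defs.resultant n).
Notation mono := {set 'I_n}.
Variables (M : {set mono}) (C : {set {set mono}}).
Hypotheses (HL : is_linearization M C) (HC : consistent M C) (HS : simple_lin M C)
  (HA : acyclicG M C).

Lemma sum_ind_var (f : mono -> rat) (v : varT M) :
  \sum_(v' : varT M) f (val v') * ind v (val v') = f (val v).
Proof.
rewrite (bigD1 v) //= /ind eqxx mulr1 big1 ?addr0 // => v' nv.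
by rewrite (_ : (val v == val v') = false) ?mulr0 //; apply/negP => /eqP /val_inj E; rewrite E eqxx in nv.
Qed.

Lemma sum_ind_set (c : {set mono}) (f : mono -> rat) (x : mono) :
  \sum_(m in c) f m * (x == m)%:R = (x \in c)%:R * f x.
Proof.
case xc: (x \in c).
  rewrite (bigD1 x xc) /= eqxx mulr1 big1 ?addr0 ?mul1r // => m /andP[_ mx].
  by rewrite eq_sym (negPf mx) mulr0.
by rewrite mul0r big1 // => m mc; rewrite (_ : (x == m) = false) ?mulr0 //; apply/negP => /eqP E; rewrite E mc in xc.
Qed.

Lemma dot_ind (y : varT M -> rat) (m : mono) (mM : m \in M) :
  dotp (fun v => ind v m) y = y (Sub m mM).
Proof.
rewrite /dotp (bigD1 (Sub m mM)) //= /ind SubK eqxx mul1r big1 ?addr0 // => v nv.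
case E: (val v == m); last by rewrite mul0r.
move/eqP: E => E; move: nv; have -> : v = Sub m mM by apply: val_inj; rewrite SubK.
by rewrite eqxx.
Qed.

Lemma dot_indY (Y : mono -> rat) (m : mono) (mM : m \in M) :
  dotp (fun v => ind v m) (fun v : varT M => Y (val v)) = Y m.
Proof. by rewrite dot_ind SubK. Qed.

Theorem tdi_main : TDI (@sys_a n M C) (@sys_b n M C).
Proof.
move=> w wi _.
pose Wm := fun m : mono => oapp w 0 (insub m : option (varT M)).
have Wmv : forall v : varT M, Wm (val v) = w v by move=> v; rewrite /Wm valK.
have Wmi : forall m, Wm m \is a Num.int by move=> m; rewrite /Wm; case: insub => //=.
have [al [be [ga [de [Y S]]]]] := claim HL HC HS HA (ltnSn #|C|) (subxx C) Wmi.
pose lam : rowT M C -> rat := fun r => match r with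
  | inl (inl v) => al (val v) | inl (inr v) => be (val v)
  | inr (inl p) => ga (val p).1 (val p).2 | inr (inr c) => de (val c) end.
pose y : varT M -> rat := fun v => Y (val v).
have [Sbox Scons] := s_feas S.
have yfeas : lp_feasible (@sys_a n M C) (@sys_b n M C) y.
  case => [[v|v]|[p|c]].
  - rewrite (_ : sys_a (inl (inl v)) = fun v' => - ind v' (val v)) //.
    rewrite dotpN dot_indY ?(valP v) //=; have := Sbox _ (valP v); case/andP => h _; lra.
  - rewrite (_ : sys_a (inl (inr v)) = fun v' => ind v' (val v)) //.
    by rewrite dot_indY ?(valP v) //=; have := Sbox _ (valP v); case/andP.
  - case: p => [[c m] H]; have /andP[cC mc] : (c \in C) && (m \in c) := H.
    rewrite (_ : sys_a _ = fun v' => ind v' (res c) - ind v' m) //.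
    have mM : m \in M := subsetP (C_sub HL cC) _ mc.
    rewrite dotpB !dot_indY ?(res_M HL cC) //=.
    have := (Scons c cC).1 m mc; lra.
  - case: c => [c cC].
    rewrite (_ : sys_a _ = fun v' => (\sum_(m in c) ind v' m) - ind v' (res c)) //.
    rewrite dotpB dot_indY ?(res_M HL cC) // dotp_sum /=.
    rewrite (eq_bigr Y); last by move=> m mc; rewrite dot_indY // (subsetP (C_sub HL cC)).
    exact: (Scons c cC).2.
have P3e : forall v : varT M,
    \sum_(p : pairT C) lam (inr (inl p)) * sys_a (inr (inl p)) v =
    \sum_(c in C) ((val v == res c)%:R * \sum_(m in c) ga c m - (val v \in c)%:R * ga c (val v)).
  move=> v.
  have -> : \sum_(p : pairT C) lam (inr (inl p)) * sys_a (inr (inl p)) v =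
     \sum_(q | (q.1 \in C) && (q.2 \in q.1))
        (fun q : {set mono} * mono => ga q.1 q.2 * (ind v (res q.1) - ind v q.2)) q.
    exact: (sum_sig (fun q : {set mono} * mono => (q.1 \in C) && (q.2 \in q.1))
                    (fun q : {set mono} * mono => ga q.1 q.2 * (ind v (res q.1) - ind v q.2))).
  rewrite -(pair_big_dep (fun c : {set mono} => c \in C) (fun c m => m \in c)
              (fun c m => ga c m * (ind v (res c) - ind v m))) /=.
  apply: eq_bigr => c cC.
  rewrite (eq_bigr (fun m => (ind v (res c)) * ga c m - ga c m * (val v == m)%:R)); last first.
    by move=> m _; rewrite /ind; ring.
  by rewrite sumrB -mulr_sumr sum_ind_set.
have P4e : forall v : varT M,
    \sum_(c : consT C) lam (inr (inr c)) * sys_a (inr (inr c)) v =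
    \sum_(c in C) de c * ((val v \in c)%:R - (val v == res c)%:R).
  move=> v.
  have -> : \sum_(c : consT C) lam (inr (inr c)) * sys_a (inr (inr c)) v =
     \sum_(c | c \in C) (fun c => de c * ((\sum_(m in c) ind v m) - ind v (res c))) c.
    exact: (sum_sig (fun c => c \in C) (fun c => de c * ((\sum_(m in c) ind v m) - ind v (res c)))).
  apply: eq_bigr => c _ /=.
  rewrite (eq_bigr (fun m => 1 * (val v == m)%:R)); last by move=> m _; rewrite mul1r.
  by rewrite sum_ind_set mulr1.
exists lam; split; [split|..].
- by case => [[v|v]|[p|c]] /=; [case: (s_ab S (val v)) | case: (s_ab S (val v)) | case: (s_g S (val p).1 (val p).2) | case: (s_d S (val c))].
- move=> v; rewrite !big_sumType /= P3e P4e.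
  rewrite (eq_bigr (fun v' => - (al (val v') * ind v (val v')))); last by move=> v' _; rewrite mulrN.
  rewrite sumrN sum_ind_var sum_ind_var -Wmv -(s_col S (valP v)) /col.
  have -> : forall A B, A + B = \sum_(c in C) ((res c == val v)%:R * (\sum_(m' in c) ga c m' - de c)
                               + (val v \in c)%:R * (de c - ga c (val v))) ->
      - al (val v) + be (val v) + (A + B) = be (val v) - al (val v) + \sum_(c in C) ((res c == val v)%:R * (\sum_(m' in c) ga c m' - de c)
                               + (val v \in c)%:R * (de c - ga c (val v))).
    by move=> A B ->; ring.
  by [].
  rewrite -big_split; apply: eq_bigr => c _ /=; rewrite eq_sym; ring.
- by case => [[v|v]|[p|c]] /=; [case: (s_ab S (val v)) | case: (s_ab S (val v)) | case: (s_g S (val p).1 (val p).2) | case: (s_d S (val c))].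
- move=> mu dmu; apply: le_trans (weak_dual yfeas dmu).
  rewrite le_eqVlt; apply/orP; left; apply/eqP.
  rewrite /dual_obj !big_sumType /=.
  rewrite big1 ?add0r; last by move=> v _; rewrite mul0r.
  rewrite [X in _ + (X + _)]big1 ?add0r; last by move=> p _; rewrite mul0r.
  rewrite (eq_bigr (fun v => be (val v))); last by move=> v _; rewrite mul1r.
  have -> : \sum_(c : consT C) (#|val c|%:R - 1) * de (val c) = \sum_(c | c \in C) (fun c => de c * (#|c|%:R - 1)) c.
    rewrite -(sum_sig (fun c => c \in C) (fun c => de c * (#|c|%:R - 1))).
    by apply: eq_bigr => c _; rewrite mulrC.
  have -> : \sum_(v : varT M) be (val v) = \sum_(m | m \in M) be m.
    exact: (sum_sig (fun m => m \in M) be).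
  rewrite -[_ + _]/(dobj M C be de) (s_obj S) /pobj /dotp.
  rewrite -(sum_sig (fun m => m \in M) (fun m => Wm m * Y m)).
  by apply: eq_bigr => v _; rewrite Wmv.
Qed.

End Final.

Close Scope ring_scope.

Theorem lemma3p10 (n : nat) (M : {set {set 'I_n}}) (C : {set {set {set 'I_n}}}) :
  is_linearization M C -> consistent M C -> simple_lin M C -> acyclicG M C ->
  TDI (@sys_a n M C) (@sys_b n M C).
Proof. move=> HL HC HS HA; exact: (tdi_main HL HC HS HA). Qed.
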